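(* Let $A$, $Y$, $\hat{Y}$ be random variables on a common probability space, where $A$ takes values in a finite set $\mathcal{A}$ and $Y,\hat{Y}$ take values in a finite set $\mathcal{Y}$. Identify each element of a finite value set with its one-hot vector, use the $\ell_p$-norm $\|\cdot\|_p$ ($p\ge 1$) as ground metric, and for pairs use the $\ell_p$-norm of the concatenated one-hot vectors. For $a\in\mathcal{A}$, $y\in\mathcal{Y}$ let $$\mathbf{DP}_{a,y}=\mathbb{P}(\hat{Y}=y\mid A=a)-\mathbb{P}(\hat{Y}=y),\qquad \mathbf{EO}_{a,y}=\mathbb{P}(\hat{Y}=Y\mid Y=y,A=a)-\mathbb{P}(\hat{Y}=Y\mid Y=y).$$ Then $$I_W(\hat{Y},A)=\frac{\sqrt[p]{2}}{2}\sum_{a\in\mathcal{A}}\mathbb{P}(A=a)\sum_{y\in\mathcal{Y}}\left|\mathbf{DP}_{a,y}\right|,$$ and, for every $y\in\mathcal{Y}$, $$I_W\big((\hat{Y}=Y)\mid Y=y,\;A\mid Y=y\big)=\sqrt[p]{2}\sum_{a\in\mathcal{A}}\mathbb{P}(A=a\mid Y=y)\left|\mathbf{EO}_{a,y}\right|.$$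
   Context: For random variables $U,V$, the Wasserstein Dependency Measure is $I_W(U,V)=W_1(p(U,V),p(U)p(V))$, where $W_1$ is the 1-Wasserstein (earth mover's) distance with respect to the ground metric, $p(U,V)$ is the joint law and $p(U)p(V)$ the product of the marginal laws. The quantity $I_W((\hat{Y}=Y)\mid Y=y, A\mid Y=y)$ denotes $W_1$ between the joint law of the binary indicator $\mathbb{1}[\hat{Y}=Y]$ and $A$ conditionally on $Y=y$, and the product of their conditional marginals given $Y=y$ (the binary indicator also being one-hot encoded). With one-hot encoding and the $\ell_p$ ground metric, two distinct values of the same variable are at distance $\sqrt[p]{2}$. *)

(* Defs.v *)
From HB Require Import structures.
From mathcomp Require Import all_boot all_order all_algebra.
From mathcomp Require Import all_classical all_reals all_analysis.
Set Implicit Arguments. Unset Strict Implicit. Unset Printing Implicit Defensive.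
Import Order.TTheory GRing.Theory Num.Theory.
Local Open Scope classical_set_scope.
Local Open Scope ring_scope.

Section WDM.
Variable R : realType.

Definition onehot (X : finType) (x : X) : X -> R :=
  fun s => if s == x then 1 else 0.

Definition lp_dist2 (p : R) (U V : finType) (x x' : U * V) : R :=
  (\sum_(u : U) `|onehot x.1 u - onehot x'.1 u| `^ p
   + \sum_(v : V) `|onehot x.2 v - onehot x'.2 v| `^ p) `^ p^-1.

Definition coupling (X : finType) (mu nu : X -> R) (pi : X -> X -> R) : Prop :=
  [/\ forall x y, 0 <= pi x y,
      forall x, \sum_(y : X) pi x y = mu x &
      forall y, \sum_(x : X) pi x y = nu y].

Definition W1 (X : finType) (dist : X -> X -> R) (mu nu : X -> R) : R :=
  inf [set w | exists pi, coupling mu nu pi /\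
                 w = \sum_(x : X) \sum_(y : X) pi x y * dist x y].

Definition marg1 (U V : finType) (j : U * V -> R) (u : U) : R :=
  \sum_(v : V) j (u, v).
Definition marg2 (U V : finType) (j : U * V -> R) (v : V) : R :=
  \sum_(u : U) j (u, v).

Definition IW (p : R) (U V : finType) (j : U * V -> R) : R :=
  W1 (@lp_dist2 p U V) j (fun uv => marg1 j uv.1 * marg2 j uv.2).

Variables (d : measure_display) (T : measurableType d).

Definition Pr (P : probability T R) (E : set T) : R := fine (P E).
Definition condPr (P : probability T R) (E F : set T) : R :=
  Pr P (E `&` F) / Pr P F.

Definition law2 (P : probability T R) (U V : finType) (X1 : T -> U) (X2 : T -> V)
  : U * V -> R :=
  fun uv => Pr P (X1 @^-1` [set uv.1] `&` X2 @^-1` [set uv.2]).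
Definition condlaw2 (P : probability T R) (U V : finType) (X1 : T -> U)
  (X2 : T -> V) (F : set T) : U * V -> R :=
  fun uv => condPr P (X1 @^-1` [set uv.1] `&` X2 @^-1` [set uv.2]) F.

Definition DP (P : probability T R) (SA SY : finType) (A : T -> SA)
  (Yh : T -> SY) (a : SA) (y : SY) : R :=
  condPr P (Yh @^-1` [set y]) (A @^-1` [set a]) - Pr P (Yh @^-1` [set y]).

Definition EO (P : probability T R) (SA SY : finType) (A : T -> SA)
  (Y Yh : T -> SY) (a : SA) (y : SY) : R :=
  condPr P [set w | Yh w = Y w] (Y @^-1` [set y] `&` A @^-1` [set a])
  - condPr P [set w | Yh w = Y w] (Y @^-1` [set y]).

End WDM.

(* Main.v *)
Require Import Defs.
From HB Require Import structures.
From mathcomp Require Import all_boot all_order all_algebra.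
From mathcomp Require Import all_classical all_reals all_analysis.
From mathcomp Require Import ring lra.
Import Order.TTheory GRing.Theory Num.Theory.
Local Open Scope classical_set_scope.
Local Open Scope ring_scope.

Section W.
Variable R : realType.
Variable p : R.
Hypothesis hp : 1 <= p.

Lemma p_neq0 : p != 0. Proof. apply/negP => /eqP p0; move: hp; rewrite p0; lra. Qed.
Lemma pinv_neq0 : p^-1 != 0. Proof. by rewrite invr_eq0 p_neq0. Qed.
Lemma pinv_ge0 : 0 <= p^-1. Proof. by rewrite invr_ge0 (le_trans ler01 hp). Qed.

Lemma onehot_sum (X : finType) (a b : X) :
  \sum_(u : X) `|onehot R a u - onehot R b u| `^ p = if a == b then 0 else 2.
Proof.
case: eqP => [->|/eqP nab].
  by rewrite big1 // => u _; rewrite subrr normr0 powR0 // p_neq0.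
rewrite (bigD1 a) //= (bigD1 b) 1?eq_sym //= big1 => [|u /andP[ua ub]].
  rewrite /onehot eqxx (negbTE nab) eq_sym (negbTE nab) eqxx subr0 sub0r normrN normr1.
  by rewrite powR1 addr0.
by rewrite /onehot (negbTE ua) (negbTE ub) subrr normr0 powR0 // p_neq0.
Qed.

Lemma dist_eq (U V : finType) (x y : U * V) : lp_dist2 p x y =
  ((if x.1 == y.1 then 0 else 2) + (if x.2 == y.2 then 0 else 2)) `^ p^-1.
Proof. by rewrite /lp_dist2 !onehot_sum. Qed.

Lemma dist_xx (U V : finType) (x : U * V) : lp_dist2 p x x = 0.
Proof. by rewrite dist_eq !eqxx addr0 powR0 // pinv_neq0. Qed.

Lemma dist_row (U V : finType) (x y : U * V) : x.1 == y.1 -> x != y ->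
  lp_dist2 p x y = 2 `^ p^-1.
Proof.
case: x y => [x1 x2] [y1 y2] /= /eqP e nxy; subst y1.
rewrite dist_eq /= eqxx add0r; case: eqP => // e.
by rewrite e eqxx in nxy.
Qed.

Lemma dist_ge (U V : finType) (x y : U * V) : x != y ->
  2 `^ p^-1 <= lp_dist2 p x y.
Proof.
case: x y => [x1 x2] [y1 y2] /= nxy.
rewrite dist_eq /=; apply: ge0_ler_powR; rewrite ?nnegrE ?pinv_ge0 //.
all: try by case: ifP; case: ifP => _ _; lra.
case: eqP => [e1|_]; case: eqP => [e2|_] //; try lra.
by rewrite e1 e2 eqxx in nxy.
Qed.

Lemma dist_ge0 (U V : finType) (x y : U * V) : 0 <= lp_dist2 p x y.
Proof. exact: powR_ge0. Qed.

Lemma sum_row (U V : finType) (g : U * V -> R) (u : U) :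
  \sum_(x : U * V) (x.1 == u)%:R * g x = \sum_(v : V) g (u, v).
Proof.
transitivity (\sum_(x : U * V) (fun a b => (a == u)%:R * g (a, b)) x.1 x.2).
  by apply: eq_bigr => -[a b] _.
rewrite -(pair_bigA _ (fun a b => (a == u)%:R * g (a, b))) /= (bigD1 u) //=.
rewrite [X in _ + X]big1.
  by rewrite eqxx addr0; apply: eq_bigr => v _; rewrite mul1r.
move=> a au; rewrite (negbTE au).
by rewrite big1 // => v _; rewrite mul0r.
Qed.


Section Main.
Variables (U V : finType) (j : U * V -> R).
Hypotheses (j0 : forall x, 0 <= j x) (j1 : \sum_x j x = 1).

Let q (x : U * V) := marg1 j x.1 * marg2 j x.2.

Lemma sum_m1 : \sum_u marg1 j u = 1.
Proof. rewrite /marg1 (pair_bigA _ (fun a b => j (a, b))) -j1. by apply: eq_bigr => -[]. Qed.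
Lemma sum_m2 : \sum_v marg2 j v = 1.
Proof. rewrite /marg2 exchange_big /= -sum_m1. by []. Qed.

Lemma sum_q : \sum_x q x = 1.
Proof.
rewrite /q -(pair_bigA _ (fun a b => marg1 j a * marg2 j b)) /=.
under eq_bigr do rewrite -mulr_sumr sum_m2 mulr1.
exact: sum_m1.
Qed.

Lemma q0 x : 0 <= q x.
Proof. by rewrite /q /marg1 /marg2 mulr_ge0 // sumr_ge0. Qed.

Let fp x := if q x <= j x then j x - q x else 0.
Let fm x := if q x <= j x then 0 else q x - j x.
Let mn x := if q x <= j x then q x else j x.
Let S u := \sum_v fp (u, v).

Lemma fp0 x : 0 <= fp x. Proof. rewrite /fp; case: (leP (q x) (j x)) => h; lra. Qed.
Lemma fm0 x : 0 <= fm x. Proof. rewrite /fm; case: (leP (q x) (j x)) => h; lra. Qed.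
Lemma mn0 x : 0 <= mn x. Proof. have := j0 x; have := q0 x. rewrite /mn; case: (leP (q x) (j x)) => h; lra. Qed.
Lemma fpm x : fp x * fm x = 0. Proof. rewrite /fp /fm; case: (leP (q x) (j x)) => h; ring. Qed.
Lemma mnp x : mn x + fp x = j x. Proof. rewrite /fp /mn; case: (leP (q x) (j x)) => h; ring. Qed.
Lemma mnm x : mn x + fm x = q x. Proof. rewrite /fm /mn; case: (leP (q x) (j x)) => h; ring. Qed.
Lemma fp_abs x : fp x = (`|j x - q x| + (j x - q x)) / 2.
Proof.
rewrite /fp; case: (leP (q x) (j x)) => h.
  rewrite ger0_norm; lra.
rewrite ltr0_norm; lra.
Qed.

Lemma Sm u : \sum_v fm (u, v) = S u.
Proof.
apply/eqP; rewrite -subr_eq0 -sumrB.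
have -> : \sum_v (fm (u, v) - fp (u, v)) = \sum_v (q (u, v) - j (u, v)).
  by apply: eq_bigr => v _; rewrite /fm /fp; case: (leP (q (u, v)) (j (u, v))) => h; ring.
rewrite sumrB /q /= -mulr_sumr sum_m2 mulr1 /marg1 subrr //.
Qed.

Lemma fp_leS x : fp x <= S x.1.
Proof. case: x => u v; rewrite /S (bigD1 v) //= lerDl sumr_ge0 // => *; exact: fp0. Qed.
Lemma fm_leS x : fm x <= S x.1.
Proof. case: x => u v; rewrite -Sm (bigD1 v) //= lerDl sumr_ge0 // => *; exact: fm0. Qed.

Lemma fpS x : fp x / S x.1 * S x.1 = fp x.
Proof.
have [e|nz] := eqVneq (S x.1) 0.
  rewrite e mulr0; have := fp_leS x; rewrite e; have := fp0 x; lra.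
by rewrite divfK.
Qed.
Lemma fmS x : fm x / S x.1 * S x.1 = fm x.
Proof.
have [e|nz] := eqVneq (S x.1) 0.
  rewrite e mulr0; have := fm_leS x; rewrite e; have := fm0 x; lra.
by rewrite divfK.
Qed.

Let pi (x y : U * V) := (x == y)%:R * mn x + (x.1 == y.1)%:R * (fp x * fm y / S x.1).

Lemma sum_diag (f : U * V -> R) (x : U * V) : \sum_y (x == y)%:R * f y = f x.
Proof.
rewrite (bigD1 x) //= eqxx mul1r big1 ?addr0 // => y yx.
by rewrite eq_sym (negbTE yx) mul0r.
Qed.

Lemma sum_diagc (x : U * V) (a : R) : \sum_y (x == y)%:R * a = a.
Proof.
rewrite (bigD1 x) //= eqxx mul1r big1 ?addr0 // => y yx.
by rewrite eq_sym (negbTE yx) mul0r.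
Qed.

Lemma row_part (x : U * V) : \sum_y (x.1 == y.1)%:R * (fp x * fm y / S x.1) = fp x.
Proof.
transitivity (fp x / S x.1 * \sum_y (y.1 == x.1)%:R * fm y).
  rewrite mulr_sumr; apply: eq_bigr => y _; rewrite eq_sym; ring.
by rewrite sum_row Sm fpS.
Qed.

Lemma col_part (y : U * V) : \sum_x (x.1 == y.1)%:R * (fp x * fm y / S x.1) = fm y.
Proof.
transitivity (fm y / S y.1 * \sum_x (x.1 == y.1)%:R * fp x).
  rewrite mulr_sumr; apply: eq_bigr => x _.
  case: eqP => [->|_]; [ring | by rewrite !mul0r mulr0].
by rewrite sum_row fmS.
Qed.

Lemma pi_coupling : coupling j q pi.
Proof.
split.
- move=> x y; rewrite /pi addr_ge0 ?mulr_ge0 ?invr_ge0 ?fp0 ?fm0 ?mn0 //.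
  + by rewrite /S sumr_ge0 // => *; exact: fp0.
- move=> x; rewrite /pi big_split /= sum_diagc row_part; exact: mnp.
- move=> y; rewrite /pi big_split /= col_part -(mnm y); congr (_ + _).
  rewrite (bigD1 y) //= eqxx mul1r big1 ?addr0 // => x xy.
  by rewrite (negbTE xy) mul0r.
Qed.

Let k := 2 `^ p^-1.
Let c := k / 2 * \sum_x `|j x - q x|.

Lemma sum_fp : \sum_x fp x = (\sum_x `|j x - q x|) / 2.
Proof.
under eq_bigr do rewrite fp_abs.
rewrite -mulr_suml big_split /= sumrB j1 sum_q subrr addr0 //.
Qed.

Lemma pi_cost : \sum_x \sum_y pi x y * lp_dist2 p x y = c.
Proof.
transitivity (\sum_x \sum_y k * ((x.1 == y.1)%:R * (fp x * fm y / S x.1))).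
  apply: eq_bigr => x _; apply: eq_bigr => y _; rewrite /pi.
  have [<-|nxy] := eqVneq x y.
    by rewrite dist_xx mulr0 fpm mul0r !mulr0.
  rewrite mul0r add0r.
  have [e|ne] := eqVneq x.1 y.1.
    by rewrite dist_row // ?e ?eqxx // mulrC.
  by rewrite !mul0r mulr0.
under eq_bigr do rewrite -mulr_sumr row_part.
by rewrite -mulr_sumr sum_fp /c; rewrite mulrA mulrAC.
Qed.

Lemma cost_lb pi' : coupling j q pi' -> c <= \sum_x \sum_y pi' x y * lp_dist2 p x y.
Proof.
case=> pi0 r1 c1.
have k0 : 0 <= k by exact: powR_ge0.
have -> : c = \sum_x k * fp x by rewrite -mulr_sumr sum_fp /c mulrA mulrAC.
apply: ler_sum => x _.
have h1 : \sum_y pi' x y * lp_dist2 p x y >= \sum_y pi' x y * (k * (x != y)%:R).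
  apply: ler_sum => y _; apply: ler_wpM2l => //.
  have [<-|nxy] := eqVneq x y; first by rewrite mulr0 dist_ge0.
  by rewrite mulr1; exact: dist_ge.
apply: le_trans h1.
have e : \sum_y pi' x y * (k * (x != y)%:R) = k * (j x - pi' x x).
  rewrite -(r1 x) (bigD1 x) //= [in RHS](bigD1 x) //= eqxx /=.
  rewrite (_ : \sum_(i | i != x) pi' x i * (k * (x != i)%:R) = k * \sum_(i | i != x) pi' x i).
    ring.
  rewrite mulr_sumr; apply: eq_bigr => y yx.
  by rewrite eq_sym yx mulr1 mulrC.
rewrite e; apply: ler_wpM2l => //.
have hq : pi' x x <= q x.
  rewrite -(c1 x) (bigD1 x) //= lerDl sumr_ge0 // => *; exact: pi0.
have hj : pi' x x <= j x.
  rewrite -(r1 x) (bigD1 x) //= lerDl sumr_ge0 // => *; exact: pi0.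
rewrite /fp; case: (leP (q x) (j x)) => h; lra.
Qed.

Lemma IW_TV : IW p j = 2 `^ p^-1 / 2 * \sum_x `|j x - marg1 j x.1 * marg2 j x.2|.
Proof.
rewrite /IW /W1 -/q -/k -/c.
set E := [set w | _].
have Ec : E c by exists pi; split; [exact: pi_coupling | rewrite pi_cost].
have lb : lbound E c by move=> w [pi' [cp ->]]; exact: cost_lb.
apply: le_anti; apply/andP; split.
  by apply: ge_inf => //; exists c.
by apply: lb_le_inf => //; exists c.
Qed.

End Main.
End W.
Section Prob.
Variables (R : realType) (d : measure_display) (T : measurableType d)
  (P : probability T R).

Lemma Pr_ge0 E : 0 <= Pr P E.
Proof. exact/fine_ge0/measure_ge0. Qed.

Lemma Pr_fin E : measurable E -> P E \is a fin_num.
Proof. exact: fin_num_measure. Qed.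

Lemma PrU E F : measurable E -> measurable F -> E `&` F = set0 ->
  Pr P (E `|` F) = Pr P E + Pr P F.
Proof. by move=> mE mF EF; rewrite /Pr measureU // fineD // Pr_fin. Qed.

Lemma Pr0 : Pr P set0 = 0. Proof. by rewrite /Pr measure0. Qed.
Lemma PrT : Pr P setT = 1. Proof. by rewrite /Pr probability_setT. Qed.

Lemma Pr_le E F : measurable E -> measurable F -> E `<=` F -> Pr P E <= Pr P F.
Proof.
move=> mE mF EF; apply: fine_le; rewrite ?Pr_fin //.
by apply: le_measure; rewrite ?inE.
Qed.

Lemma Pr_sum (U : finType) (X : T -> U)
  (mX : forall u, measurable (X @^-1` [set u])) G (mG : measurable G) :
  \sum_u Pr P (X @^-1` [set u] `&` G) = Pr P G.
Proof.
have H : forall s : seq U, uniq s -> measurable (X @^-1` [set u | u \in s]) /\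
   \sum_(u <- s) Pr P (X @^-1` [set u] `&` G) = Pr P (X @^-1` [set u | u \in s] `&` G).
  elim => [|a s IH] /=.
    move=> _; rewrite big_nil.
    have -> : X @^-1` [set u | u \in [::]] = set0 by apply/seteqP; split => w.
    by split; [exact: measurable0 | rewrite set0I Pr0].
  move=> /andP[nas us]; have [ms es] := IH us.
  have eq : X @^-1` [set u | u \in a :: s] = X @^-1` [set a] `|` X @^-1` [set u | u \in s].
    apply/seteqP; split => w /=; rewrite /preimage /= in_cons.
      by move/orP => [/eqP->|h]; [left|right].
    by move=> [->|h]; rewrite ?eqxx ?h ?orbT.
  split; first by rewrite eq; exact: measurableU.
  rewrite big_cons es eq setIUl PrU //; try exact: measurableI.
  apply/seteqP; split => w //= [[/= xa _] [/= xs _]].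
  by move: nas; rewrite -xa xs.
have [_ e] := H (index_enum U) (index_enum_uniq U).
rewrite e (_ : X @^-1` [set u | u \in index_enum U] = setT) ?setTI //.
by apply/seteqP; split => w //= _; rewrite /preimage /= mem_index_enum.
Qed.

Lemma Pr_sum' (U : finType) (X : T -> U)
  (mX : forall u, measurable (X @^-1` [set u])) G (mG : measurable G) :
  \sum_u Pr P (G `&` X @^-1` [set u]) = Pr P G.
Proof. by under eq_bigr do rewrite setIC; exact: Pr_sum. Qed.

Lemma Pr_sumT (U : finType) (X : T -> U)
  (mX : forall u, measurable (X @^-1` [set u])) :
  \sum_u Pr P (X @^-1` [set u]) = 1.
Proof. by under eq_bigr do rewrite -[X in Pr P X]setIT; rewrite Pr_sum // PrT. Qed.

Lemma meas_eq (SY : finType) (Y Yh : T -> SY)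
  (mY : forall y, measurable (Y @^-1` [set y]))
  (mYh : forall y, measurable (Yh @^-1` [set y])) :
  measurable [set w | Yh w = Y w].
Proof.
have H : forall s : seq SY, measurable [set w | Yh w = Y w /\ Y w \in s].
  elim => [|a s IH].
    have -> : [set w | Yh w = Y w /\ Y w \in [::]] = set0.
      by apply/seteqP; split => w //= [].
    exact: measurable0.
  have -> : [set w | Yh w = Y w /\ Y w \in a :: s] =
     (Yh @^-1` [set a] `&` Y @^-1` [set a]) `|` [set w | Yh w = Y w /\ Y w \in s].
    apply/seteqP; split => w /=; rewrite /preimage /= in_cons.
      by move=> [e /orP[/eqP ea|h]]; [left; rewrite e ea | right].
    by move=> [[-> ->]|[-> h]]; rewrite ?eqxx ?h ?orbT.
  by apply: measurableU => //; apply: measurableI.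
have -> : [set w | Yh w = Y w] = [set w | Yh w = Y w /\ Y w \in index_enum SY].
  by apply/seteqP; split => w /=; [move=> ->; rewrite mem_index_enum | case].
exact: H.
Qed.

End Prob.

Lemma sum_pair (R : realType) (U V : finType) (f : U * V -> R) :
  \sum_x f x = \sum_u \sum_v f (u, v).
Proof. by rewrite (pair_bigA _ (fun a b => f (a, b))); apply: eq_bigr => -[]. Qed.

Lemma alg1 (R : realType) (e pa py : R) : 0 <= e -> e <= pa ->
  `|e - py * pa| = pa * `|e / pa - py|.
Proof.
move=> e0 epa; have [z|nz] := eqVneq pa 0.
  have -> : e = 0 by subst pa; lra.
  by rewrite z !mul0r mulr0 subr0 normr0.
have pa0 : 0 < pa by rewrite lt0r nz /=; lra.
have h : pa * `|e/pa - py| = `|pa * (e/pa - py)| by rewrite normrM (ger0_norm (ltW pa0)).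
rewrite h; congr `|_|.
by field; exact: lt0r_neq0.
Qed.

Lemma alg2 (R : realType) (e c pf m : R) : 0 <= e -> e <= c -> 0 < pf ->
  `|e / pf - m * (c / pf)| = c / pf * `|e / c - m|.
Proof.
move=> e0 ec pf0; have [z|nz] := eqVneq c 0.
  have -> : e = 0 by subst c; lra.
  by rewrite z !mul0r mulr0 subr0 normr0.
have c0 : 0 < c by rewrite lt0r nz /=; lra.
have h : c / pf * `|e/c - m| = `|c / pf * (e/c - m)|.
  by rewrite normrM (ger0_norm (divr_ge0 (ltW c0) (ltW pf0))).
rewrite h; congr `|_|.
field; apply/andP; split => //; exact: lt0r_neq0.
Qed.
Theorem lemma1 (R : realType) (d : measure_display) (T : measurableType d)
  (P : probability T R) (SA SY : finType)
  (A : T -> SA) (Y Yh : T -> SY)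
  (mA : forall a, measurable (A @^-1` [set a]))
  (mY : forall y, measurable (Y @^-1` [set y]))
  (mYh : forall y, measurable (Yh @^-1` [set y]))
  (p : R) (hp : 1 <= p) :
  IW p (law2 P Yh A)
    = (2 `^ p^-1) / 2 *
      \sum_(a : SA) Pr P (A @^-1` [set a]) * \sum_(y : SY) `|DP P A Yh a y|
  /\
  (forall y : SY, 0 < Pr P (Y @^-1` [set y]) ->
    IW p (condlaw2 P (fun w => Yh w == Y w) A (Y @^-1` [set y]))
      = (2 `^ p^-1) *
        \sum_(a : SA) condPr P (A @^-1` [set a]) (Y @^-1` [set y])
                      * `|EO P A Y Yh a y|).
Proof.
split.
- set j := law2 P Yh A.
  have j0 : forall x, 0 <= j x by move=> x; exact: Pr_ge0.
  have m1 : forall y, marg1 j y = Pr P (Yh @^-1` [set y]).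
    by move=> y; rewrite /marg1 /j /law2 /= Pr_sum'.
  have m2 : forall a, marg2 j a = Pr P (A @^-1` [set a]).
    by move=> a; rewrite /marg2 /j /law2 /= Pr_sum.
  have j1 : \sum_x j x = 1.
    by rewrite sum_pair -(@Pr_sumT _ _ _ P _ _ mYh); apply: eq_bigr => y _; exact: m1.
  rewrite IW_TV //; congr (_ * _).
  rewrite sum_pair exchange_big /=; apply: eq_bigr => a _.
  rewrite mulr_sumr; apply: eq_bigr => y _.
  rewrite /= m1 m2 /DP /condPr /j /law2 /=; apply: alg1; first exact: Pr_ge0.
  by apply: Pr_le; [exact: measurableI | | exact: subIsetr].
- move=> y pF.
  set F := Y @^-1` [set y].
  have mF : measurable F by exact: mY.
  set B := fun w => Yh w == Y w.
  have Bt : B @^-1` [set true] = [set w | Yh w = Y w].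
    by apply/seteqP; split => w /=; rewrite /preimage /= /B => /eqP.
  have mB : forall b, measurable (B @^-1` [set b]).
    case.
      by rewrite Bt; exact: meas_eq.
    have -> : B @^-1` [set false] = ~` [set w | Yh w = Y w].
      apply/seteqP; split => w /=; rewrite /preimage /= /B.
        by move=> /negbT /eqP.
      by move/eqP/negbTE.
    by apply: measurableC; exact: meas_eq.
  set j := condlaw2 P B A F.
  have j0 : forall x, 0 <= j x.
    by move=> x; apply: divr_ge0; exact: Pr_ge0.
  have pF0 : Pr P F != 0 by exact: lt0r_neq0.
  have m1 : forall b, marg1 j b = Pr P (B @^-1` [set b] `&` F) / Pr P F.
    move=> b; rewrite /marg1 /j /condlaw2 /condPr /= -mulr_suml; congr (_ / _).
    rewrite -(@Pr_sum _ _ _ P _ _ mA) //; last exact: measurableI.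
    by apply: eq_bigr => a _; rewrite (setIC (B @^-1` _)) setIA.
  have m2 : forall a, marg2 j a = Pr P (A @^-1` [set a] `&` F) / Pr P F.
    move=> a; rewrite /marg2 /j /condlaw2 /condPr /= -mulr_suml; congr (_ / _).
    rewrite -(@Pr_sum _ _ _ P _ _ mB) //; last exact: measurableI.
    by apply: eq_bigr => b _; rewrite setIA.
  have j1 : \sum_x j x = 1.
    rewrite sum_pair (eq_bigr (fun b => marg1 j b)) //.
    under eq_bigr do rewrite m1.
    by rewrite -mulr_suml (@Pr_sum _ _ _ P _ _ mB) // divff.
  rewrite IW_TV //.
  rewrite sum_pair big_bool /=.
  have mt : marg1 j false = 1 - marg1 j true.
    have := @sum_m1 _ _ _ j j1; rewrite big_bool /=; lra.
  have hf : forall a, `|j (false, a) - marg1 j false * marg2 j a| =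
                      `|j (true, a) - marg1 j true * marg2 j a|.
    move=> a; have e2 : marg2 j a = j (true, a) + j (false, a).
      by rewrite /marg2 big_bool.
    rewrite mt [in LHS]e2 -normrN; congr `|_|; rewrite e2; ring.
  under [X in _ + X]eq_bigr do rewrite hf.
  have h2 : forall k s : R, k / 2 * (s + s) = k * s by move=> k s; field.
  rewrite h2.
  congr (_ * _); apply: eq_bigr => a _.
  rewrite m1 m2 Bt /j /condlaw2 /EO /condPr -/F /=.
  have e1 : (B @^-1` [set true] `&` A @^-1` [set a]) `&` F =
            [set w | Yh w = Y w] `&` (F `&` A @^-1` [set a]).
    by rewrite Bt (setIC F) setIA.
  rewrite e1 (setIC F (A @^-1` _)); apply: alg2 => //; first exact: Pr_ge0.
  apply: Pr_le; [apply: measurableI; [exact: meas_eq | exact: measurableI] | exact: measurableI | exact: subIsetr].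
Qed.
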